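(* Let $A$ be a congruence--distributive algebra in a variety $\mathcal{V}$ and let $\alpha$ be an atom of the lattice ${\rm Con}_{\mathcal{V}}(A)$. Then $|{\rm Con}_{\mathcal{V}}(A)|\leq 2\cdot|{\rm Con}_{\mathcal{V}}(A/\alpha)|$.
   Context: ${\rm Con}_{\mathcal{V}}(A)$ denotes the lattice of congruences of $A$ with respect to the type of $\mathcal{V}$; $A$ is congruence--distributive if this lattice is distributive. *)

(* Defs.v *)
From mathcomp Require Import all_boot.
From Stdlib Require Import ClassicalEpsilon.

Set Implicit Arguments.
Unset Strict Implicit.
Unset Printing Implicit Defensive.

Record signature := Signature {
  sym : Type;
  arity : sym -> nat
}.

Record algebra (S : signature) := Algebra {
  carrier :> Type;
  ops : forall f : sym S, ('I_(arity f) -> carrier) -> carrier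
}.

Section Congruences.
Variables (S : signature) (A : algebra S).

Definition is_cong (theta : A -> A -> Prop) : Prop :=
  (forall x, theta x x) /\
  (forall x y, theta x y -> theta y x) /\
  (forall x y z, theta x y -> theta y z -> theta x z) /\
  (forall (f : sym S) (xs ys : 'I_(arity f) -> A),
      (forall i, theta (xs i) (ys i)) -> theta (ops xs) (ops ys)).

Definition Con : Type := {theta : A -> A -> Prop | is_cong theta}.

Definition cmeet (phi psi : A -> A -> Prop) : A -> A -> Prop :=
  fun x y => phi x y /\ psi x y.

Definition cjoin (phi psi : A -> A -> Prop) : A -> A -> Prop :=
  fun x y => forall chi, is_cong chi ->
    (forall a b, phi a b -> chi a b) -> (forall a b, psi a b -> chi a b) ->
    chi x y.

Definition same_rel (phi psi : A -> A -> Prop) : Prop :=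
  forall x y, phi x y <-> psi x y.

Definition cong_distributive : Prop :=
  forall theta phi psi : Con,
    same_rel (cmeet (sval theta) (cjoin (sval phi) (sval psi)))
             (cjoin (cmeet (sval theta) (sval phi)) (cmeet (sval theta) (sval psi))).

Definition delta : A -> A -> Prop := fun x y => x = y.

Definition is_atom (alpha : A -> A -> Prop) : Prop :=
  is_cong alpha /\ ~ same_rel alpha delta /\
  forall theta, is_cong theta -> (forall x y, theta x y -> alpha x y) ->
    same_rel theta delta \/ same_rel theta alpha.

Definition quot_carrier (alpha : A -> A -> Prop) : Type :=
  {P : A -> Prop | exists a, P = alpha a}.

Definition qclass (alpha : A -> A -> Prop) (a : A) : quot_carrier alpha :=
  exist _ (alpha a) (ex_intro _ a erefl).

Definition qrep (alpha : A -> A -> Prop) (c : quot_carrier alpha) : A :=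
  proj1_sig (constructive_indefinite_description _ (proj2_sig c)).

Definition quot (alpha : A -> A -> Prop) : algebra S :=
  @Algebra S (quot_carrier alpha)
    (fun f xs => qclass alpha (ops (fun i => qrep (xs i)))).

End Congruences.

(* Main.v *)
Require Import Defs.
From mathcomp Require Import all_boot.
From Stdlib Require Import ClassicalEpsilon FunctionalExtensionality PropExtensionality ProofIrrelevance.

Set Implicit Arguments.
Unset Strict Implicit.

Lemma cjoin_cong (S : signature) (A : algebra S) (phi psi : A -> A -> Prop) :
  is_cong (cjoin phi psi).
Proof.
split; [|split; [|split]].
- move=> x chi [r _] _ _; exact: r.
- move=> x y H chi Hc H1 H2; have [_ [s _]] := Hc; apply: s; exact: H.
- move=> x y z H1 H2 chi Hc K1 K2; have [_ [_ [t _]]] := Hc.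
  apply: t (H1 chi Hc K1 K2) (H2 chi Hc K1 K2).
- move=> f xs ys H chi Hc K1 K2; have [_ [_ [_ c]]] := Hc.
  apply: c => i; exact: H.
Qed.

Lemma cjoin_l (S : signature) (A : algebra S) (phi psi : A -> A -> Prop) x y :
  phi x y -> cjoin phi psi x y.
Proof. by move=> H chi _ K1 _; apply: K1. Qed.

Lemma cjoin_r (S : signature) (A : algebra S) (phi psi : A -> A -> Prop) x y :
  psi x y -> cjoin phi psi x y.
Proof. by move=> H chi _ _ K2; apply: K2. Qed.

Lemma qrep_qclass (S : signature) (A : algebra S) (alpha : A -> A -> Prop) a :
  is_cong alpha -> alpha a (qrep (qclass alpha a)).
Proof.
move=> [r _].
rewrite /qrep.
case: (constructive_indefinite_description _ _) => a' /= E.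
by rewrite E; apply: r.
Qed.

Definition qJ (S : signature) (A : algebra S) (alpha theta : A -> A -> Prop) :
  quot alpha -> quot alpha -> Prop :=
  fun c d => cjoin theta alpha (qrep c) (qrep d).
Arguments qJ {S A} alpha theta _ _.

Lemma qJ_cong (S : signature) (A : algebra S) (alpha theta : A -> A -> Prop) :
  is_cong alpha -> is_cong (A := quot alpha) (qJ alpha theta).
Proof.
move=> Ha.
have [r [s [t c]]] := cjoin_cong theta alpha.
split; [|split; [|split]].
- move=> x; exact: r.
- move=> x y; exact: s.
- move=> x y z; exact: t.
- move=> f xs ys H; rewrite /qJ /=.
  have H1 := c f (fun i => qrep (xs i)) (fun i => qrep (ys i)) H.
  change (cjoin theta alpha
    (qrep (qclass alpha (ops (fun i => qrep (xs i)))))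
    (qrep (qclass alpha (ops (fun i => qrep (ys i)))))).
  eapply t; [|eapply t; [exact: H1|]].
  + apply: s; apply: cjoin_r; exact: qrep_qclass.
  + apply: cjoin_r; exact: qrep_qclass.
Qed.

Lemma sig_eq_rel (T : Type) (P : (T -> T -> Prop) -> Prop) (a b : {r | P r}) :
  (forall x y, sval a x y <-> sval b x y) -> a = b.
Proof.
case: a => a Pa; case: b => b Pb /= H.
have E : a = b.
  apply: functional_extensionality => x; apply: functional_extensionality => y.
  by apply: propositional_extensionality.
subst b; by rewrite (proof_irrelevance _ Pa Pb).
Qed.

Theorem lemma4p26 (S : signature) (A : algebra S) (alpha : A -> A -> Prop) :
  cong_distributive A -> is_atom alpha ->
  exists g : Con A -> bool * Con (quot alpha), injective g.
Proof.
move=> Hd [Ha [Hne Hat]].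
pose b (th : Con A) : bool :=
  if excluded_middle_informative (forall x y, alpha x y -> sval th x y)
  then true else false.
pose q (th : Con A) : Con (quot alpha) :=
  exist _ (qJ alpha (sval th)) (qJ_cong (sval th) Ha).
exists (fun th => (b th, q th)).
have Jeq : forall th ph : Con A, q th = q ph ->
    forall x y, cjoin (sval th) alpha x y -> cjoin (sval ph) alpha x y.
  move=> th ph E x y H.
  have E' : qJ alpha (sval th) (qclass alpha x) (qclass alpha y) =
            qJ alpha (sval ph) (qclass alpha x) (qclass alpha y).
    by move: E => /(f_equal (@proj1_sig _ _)) /= ->.
  have [r [s [t c]]] := cjoin_cong (sval th) alpha.
  have [r' [s' [t' c']]] := cjoin_cong (sval ph) alpha.
  have Hx := qrep_qclass x Ha; have Hy := qrep_qclass y Ha.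
  have H2 : qJ alpha (sval th) (qclass alpha x) (qclass alpha y).
    rewrite /qJ; eapply t; [|eapply t; [exact: H|]].
    - apply: s; exact: cjoin_r.
    - exact: cjoin_r.
  rewrite E' /qJ in H2.
  eapply t'; [|eapply t'; [exact: H2|]].
  - exact: cjoin_r.
  - apply: s'; exact: cjoin_r.
have key : forall th ph : Con A, b th = b ph -> q th = q ph ->
    forall x y, sval th x y -> sval ph x y.
  move=> th ph Eb Eq x y Hxy.
  have Hj := Jeq th ph Eq x y (cjoin_l (psi:=alpha) Hxy).
  have [rp [sp [tp cp]]] := proj2_sig ph.
  move: Eb; rewrite /b.
  case: excluded_middle_informative => Ath;
  case: excluded_middle_informative => Aph // _.
  - apply: Hj (proj2_sig ph) _ Aph => //.
  - have Hm : is_cong (cmeet (sval th) alpha).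
      have [r1 [s1 [t1 c1]]] := proj2_sig th.
      have [r2 [s2 [t2 c2]]] := Ha.
      split; [|split; [|split]].
      + by move=> z; split; [apply: r1|apply: r2].
      + by move=> z w [h1 h2]; split; [apply: s1|apply: s2].
      + by move=> z w v [h1 h2] [h3 h4]; split; [apply: t1 h3|apply: t2 h4].
      + by move=> f xs ys h; split; [apply: c1 => i; case: (h i)|apply: c2 => i; case: (h i)].
    have Hd0 : forall z w, cmeet (sval th) alpha z w -> z = w.
      case: (Hat _ Hm (fun z w h => proj2 h)) => [E|E].
      * by move=> z w /E.
      * exfalso; apply: Ath => z w h; by case: (proj2 (E z w) h).
    pose al : Con A := exist _ alpha Ha.
    have H1 : cmeet (sval th) (cjoin (sval ph) (sval al)) x y by split.
    apply: (proj1 (Hd th ph al x y) H1 (sval ph) (proj2_sig ph)).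
    + by move=> z w [].
    + by move=> z w /Hd0 ->; apply: rp.
move=> th ph E.
have Eb : b th = b ph := f_equal fst E.
have Eq : q th = q ph := f_equal snd E.
apply: sig_eq_rel => x y; split.
- exact: (key th ph Eb Eq).
- exact: (key ph th (esym Eb) (esym Eq)).
Qed.
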